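(* Let $G=K_4$ and $\vec G=(V,E^+\cup E^-)$ as in the context. The all-ones vector $\mathbf 1\in\mathbb{Z}^{E^+\cup E^-}$ satisfies $\mathbf 1(\delta^+_{\vec G}(U))\ge3$ for all $\emptyset\neq U\subsetneq V$ (so it is a nowhere-zero $3$-SCD), but the arc set $E^+\cup E^-$ cannot be partitioned into $3$ strongly connected digraphs, i.e. there are no pairwise disjoint $F_1,F_2,F_3$ with $F_1\cup F_2\cup F_3=E^+\cup E^-$ and $\delta^+_{\vec G}(U)\cap F_i\neq\emptyset$ for all $i$ and all $\emptyset\neq U\subsetneq V$.
   Context: $K_4$ is the complete graph on 4 vertices. $\vec G=(V,E^+\cup E^-)$ is obtained from $G$ by replacing each edge $\{u,v\}$ by the two arcs $(u,v)$ and $(v,u)$; $\delta^+_{\vec G}(U)$ is the set of arcs leaving $U$, and $x(B)=\sum_{e\in B}x_e$. *)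

(* Defs.v *)
From mathcomp Require Import all_boot all_order all_algebra.
Set Implicit Arguments. Unset Strict Implicit. Unset Printing Implicit Defensive.

(* The bidirected digraph \vec G has one Arc
   (u,v) for every ordered pair of distinct vertices, i.e. E^+ \cup E^- is the
   set of 12 arcs below (each edge {u,v} yields (u,v) and (v,u)). *)
Notation V := (ordinal 4).
Definition Arc : finType := {a : V * V | a.1 != a.2}%type.

Definition delta_out (U : {set V}) : {set Arc} :=
  [set a : Arc | ((val a).1 \in U) && ((val a).2 \notin U)].

Definition xsum (x : Arc -> int) (B : {set Arc}) : int := (\sum_(e in B) x e)%R.

Definition proper_nonempty (U : {set V}) : bool := (U != set0) && (U != [set: V]).

(* Main.v *)
Require Import Defs.
From mathcomp Require Import all_boot all_order all_algebra.
Import GRing.Theory Num.Theory.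
From mathcomp Require Import zify.

Lemma part1 (U : {set V}) : proper_nonempty U ->
     (3 <= xsum (fun _ => 1) (delta_out U))%R.
Proof.
case/andP => hU0 hUT.
have E : [set val a | a in delta_out U] = setX U (~: U).
  apply/setP => -[x y]; rewrite !inE; apply/imsetP/andP.
    case=> a; rewrite inE => /andP[h1 h2] ->; by split.
  case=> /= h1 h2.
  have hxy : (x, y).1 != (x, y).2.
    by apply/eqP => /= Exy; move: h2; rewrite -Exy h1.
  by exists (exist _ (x, y) hxy) => //; rewrite inE /= h1.
have Hc : #|delta_out U| = #|U| * #|~: U|.
  by rewrite -cardsX -E card_imset //; apply: val_inj.
have h1 : 0 < #|U| by rewrite card_gt0.
have h2 : 0 < #|~: U|.
  rewrite card_gt0; apply: contra hUT => /eqP h.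
  by rewrite -[U]setCK h setC0.
have h3 := cardsC U; rewrite card_ord in h3.
have : 3 <= #|delta_out U| by rewrite Hc; nia.
rewrite /xsum sumr_const => h.
by rewrite -[X in (_ <= X)%R]/((#|delta_out U|)%:R)%R natz lez_nat.
Qed.

Definition allpairs4 : seq (nat*nat) :=
  [seq p <- [seq (u,v) | u <- iota 0 4, v <- iota 0 4] | p.1 != p.2].
Definition cutlist : seq (seq nat) :=
 [::[::0];[::1];[::2];[::3];[::1;2;3];[::0;2;3];[::0;1;3];[::0;1;2];[::0;1];[::0;2];[::0;3];[::1;2];[::1;3];[::2;3]].
Definition cutidx_def := [seq [seq index p allpairs4 | p <- allpairs4 & (p.1 \in U) && (p.2 \notin U)] | U <- cutlist].
Definition cutidx := Eval vm_compute in cutidx_def.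
Lemma cutidxE : cutidx = cutidx_def. Proof. by vm_compute. Qed.
Definition good (L : seq nat) : bool :=
  all (fun c => all (fun i => has (fun k => nth 0 L k == i) c) [::0;1;2]) cutidx.
Fixpoint check (k : nat) (l : seq nat) : bool :=
  match k with 0 => ~~ good l | k.+1 => all (fun x => check k (x :: l)) [::0;1;2] end.
Lemma checkT : check 12 [::]. Proof. vm_compute. reflexivity. Qed.

Lemma check_spec (l' l : seq nat) : all (fun x => x \in [::0;1;2]) l' ->
  check (size l') l -> ~~ good (catrev l' l).
Proof.
elim: l' l => [|x l' IH] l //= /andP[hx hl] hc; apply: IH => //.
by move: hx hc; rewrite !inE => /orP[/eqP->|/orP[/eqP->|/eqP->]] /andP[? /andP[? /andP[? _]]].
Qed.

Lemma cut_prop : all (fun U => has (fun k => (k \in U)) (iota 0 4) &&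
    has (fun k => (k \notin U)) (iota 0 4)) cutlist.
Proof. by vm_compute. Qed.

Section P2.
Variables F1 F2 F3 : {set Arc}.
Definition colA (a : Arc) : nat := if a \in F1 then 0 else if a \in F2 then 1 else 2.
Definition colN (u v : nat) : nat :=
  match insub ((inord u : V), (inord v : V)) : option Arc with
  | Some a => colA a | None => 0 end.
Definition Lc := [seq colN p.1 p.2 | p <- allpairs4].

Lemma colNE (a : Arc) : colN (val (val a).1) (val (val a).2) = colA a.
Proof. by rewrite /colN !inord_val -surjective_pairing valK. Qed.

Lemma Lc_good :
  [disjoint F1 & F2] -> [disjoint F1 & F3] -> [disjoint F2 & F3] ->
  (forall U : {set V}, proper_nonempty U ->
          delta_out U :&: F1 != set0 /\
          delta_out U :&: F2 != set0 /\
          delta_out U :&: F3 != set0) -> good Lc.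
Proof.
move=> d12 d13 d23 H.
rewrite /good cutidxE /cutidx_def all_map; apply/allP => U HU.
have /andP[/hasP[k0 k0i k0U] /hasP[k1 k1i k1U]] := allP cut_prop U HU.
rewrite mem_iota /= in k0i; rewrite mem_iota /= in k1i.
pose U' := [set x : V | val x \in U].
have HP : proper_nonempty U'.
  apply/andP; split; apply/negP => /eqP E.
    have : (Ordinal k0i : V) \in U' by rewrite inE.
    by rewrite E inE.
  have : (Ordinal k1i : V) \in [set: V] by rewrite inE.
  by rewrite -E inE /= (negbTE k1U).
have [n1 [n2 n3]] := H U' HP.
apply/allP => i Hi.
have [a [ha hc]] : exists a : Arc, a \in delta_out U' /\ colA a = i.
  move: Hi; rewrite !inE => /orP[/eqP->|/orP[/eqP->|/eqP->]].
  - case/set0Pn: n1 => a; rewrite inE => /andP[h1 h2]; exists a; split => //.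
    by rewrite /colA h2.
  - case/set0Pn: n2 => a; rewrite inE => /andP[h1 h2]; exists a; split => //.
    by rewrite /colA (disjointFl d12 h2) h2.
  - case/set0Pn: n3 => a; rewrite inE => /andP[h1 h2]; exists a; split => //.
    by rewrite /colA (disjointFl d13 h2) (disjointFl d23 h2).
move: ha; rewrite inE !inE => /andP[h1 h2].
set p := (val (val a).1, val (val a).2).
have pin : p \in allpairs4.
  rewrite mem_filter; apply/andP; split; first exact: (valP a).
  apply/allpairsP; exists p; rewrite !mem_iota /=; split => //.
apply/hasP; exists (index p allpairs4).
  by apply: map_f; rewrite mem_filter /= h1 h2.
rewrite /Lc (nth_map (0,0)) ?index_mem // nth_index //.
by rewrite colNE hc.
Qed.
End P2.

Lemma part2 :  ~ (exists F1 F2 F3 : {set Arc},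
       [disjoint F1 & F2] /\ [disjoint F1 & F3] /\ [disjoint F2 & F3] /\
       F1 :|: F2 :|: F3 = [set: Arc] /\
       (forall U : {set V}, proper_nonempty U ->
          delta_out U :&: F1 != set0 /\
          delta_out U :&: F2 != set0 /\
          delta_out U :&: F3 != set0)).
Proof.
case=> F1 [F2 [F3 [d12 [d13 [d23 [_ H]]]]]].
have G := @Lc_good F1 F2 F3 d12 d13 d23 H.
have : ~~ good (catrev (rev (Lc F1 F2)) [::]).
  apply: check_spec.
    rewrite all_rev; apply/allP => x /mapP [p _ ->].
    rewrite /colN; case: insub => [a|] //; rewrite /colA.
    by case: (_ \in F1); case: (_ \in F2).
  by rewrite size_rev size_map; exact: checkT.
by rewrite -[catrev _ _]/(rev (rev _)) revK G.
Qed.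

Theorem mainTheorem16 :
  (forall U : {set V}, proper_nonempty U ->
     (3 <= xsum (fun _ => 1) (delta_out U))%R)
  /\
  ~ (exists F1 F2 F3 : {set Arc},
       [disjoint F1 & F2] /\ [disjoint F1 & F3] /\ [disjoint F2 & F3] /\
       F1 :|: F2 :|: F3 = [set: Arc] /\
       (forall U : {set V}, proper_nonempty U ->
          delta_out U :&: F1 != set0 /\
          delta_out U :&: F2 != set0 /\
          delta_out U :&: F3 != set0)).
Proof. split; [exact: part1 | exact: part2]. Qed.
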